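(* Let $p\in[1,\infty]$, let $W^{(1)}\in\mathbb{R}^{n_1\times n_0}$, $W^{(2)}\in\mathbb{R}^{n_2\times n_1}$, and let $f:\mathbb{R}^{n_0}\to\mathbb{R}^{n_2}$ be the two-layer network $f(x)=W^{(2)}\sigma(W^{(1)}x)$, where $\sigma(z)=(\sigma_1(z_1),\dots,\sigma_{n_1}(z_{n_1}))$ and each $\sigma_i:\mathbb{R}\to\mathbb{R}$ is slope-restricted in $[\alpha_i,\beta_i]$ with $0\le \alpha_i\le\beta_i<\infty$. Let $\alpha=(\alpha_1,\dots,\alpha_{n_1})$, $\beta=(\beta_1,\dots,\beta_{n_1})$, let $d\in\mathbb{R}^{n_1}_{+}$ be any elementwise nonnegative vector and $D=\mathrm{diag}(d)$, so that $f(x)=W^{(2)}\big(\psi(W^{(1)}x;d)+DW^{(1)}x\big)$ with $\psi(z;d)=\sigma(z)-Dz$. Then $f$ is Lipschitz continuous with respect to the $\ell_p$ norm with constant $$L(d)=\|W^{(2)}\|_p\,\big\|\mathrm{diag}\big(\max(|\beta-d|,|d-\alpha|)\big)W^{(1)}\big\|_p+\|W^{(2)}DW^{(1)}\|_p,$$ where $\max$ and $|\cdot|$ are taken elementwise.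
   Context: A function $\sigma_i:\mathbb{R}\to\mathbb{R}$ is slope-restricted in $[\alpha_i,\beta_i]$ if $\alpha_i\le \frac{\sigma_i(x)-\sigma_i(y)}{x-y}\le\beta_i$ for all $x\neq y$. For a matrix $A$, $\|A\|_p=\sup_{\|x\|_p\le 1}\|Ax\|_p$ is the induced operator norm. A Lipschitz constant $L$ in $\ell_p$ means $\|f(x)-f(y)\|_p\le L\|x-y\|_p$ for all $x,y$. *)

(* Defs.v *)
From HB Require Import structures.
From mathcomp Require Import all_boot all_order all_algebra.
From mathcomp Require Import all_classical all_reals all_analysis.
Set Implicit Arguments. Unset Strict Implicit. Unset Printing Implicit Defensive.
Import Order.TTheory GRing.Theory Num.Theory.
Local Open Scope ring_scope.

Definition pnorm (R : realType) (n : nat) (p : \bar R) (x : 'cV[R]_n) : R :=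
  match p with
  | r%:E => (\sum_(i < n) `|x i 0| `^ r) `^ r^-1
  | _ => \big[Num.max/0]_(i < n) `|x i 0|
  end.

Definition opnorm (R : realType) (m n : nat) (p : \bar R) (A : 'M[R]_(m, n)) : R :=
  sup [set pnorm p (A *m x) | x in [set x : 'cV[R]_n | pnorm p x <= 1]].

Definition slope_restricted (R : realType) (s : R -> R) (a b : R) : Prop :=
  forall x y : R, x != y -> a <= (s x - s y) / (x - y) <= b.

Definition two_layer (R : realType) (n0 n1 n2 : nat)
  (W1 : 'M[R]_(n1, n0)) (W2 : 'M[R]_(n2, n1)) (sigma : 'I_n1 -> R -> R)
  (x : 'cV[R]_n0) : 'cV[R]_n2 :=
  W2 *m (\col_i sigma i ((W1 *m x) i 0)).

(* Main.v *)
Require Import Defs.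
From HB Require Import structures.
From mathcomp Require Import all_boot all_order all_algebra.
From mathcomp Require Import all_classical all_reals all_analysis.
From mathcomp Require Import ring.
Import Order.TTheory GRing.Theory Num.Theory.
Local Open Scope ring_scope.

Set Implicit Arguments. Unset Strict Implicit.
Section Aux.
Variable R : realType.
Variable n : nat.

Lemma powR_conv {r t x y : R} : 1 <= r -> 0 <= t -> t <= 1 -> 0 <= x -> 0 <= y ->
  (t * x + (1 - t) * y) `^ r <= t * x `^ r + (1 - t) * y `^ r.
Proof.
move=> r1 t0 t1 x0 y0.
have := @convex_powR R r r1 (Itv01 t0 t1) x y.
rewrite !inE /= !in_itv /= !andbT => /(_ x0 y0).
by rewrite !convRE.
Qed.

Definition Nr (r : R) (v : 'I_n -> R) := (\sum_i `|v i| `^ r) `^ r^-1.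
Definition Nm (v : 'I_n -> R) := \big[Num.max/0]_i `|v i|.

Lemma Nr_ge0 r v : 0 <= Nr r v. Proof. exact: powR_ge0. Qed.
Lemma Nm_ge0 v : 0 <= Nm v.
Proof. by rewrite /Nm; elim/big_ind: _ => // a b ha hb; rewrite le_max ha. Qed.

Lemma powRK {r a : R} : 0 < r -> 0 <= a -> (a `^ r) `^ r^-1 = a.
Proof. by move=> r0 a0; rewrite -powRrM mulfV ?gt_eqF // powRr1. Qed.
Lemma powRK' {r a : R} : 0 < r -> 0 <= a -> (a `^ r^-1) `^ r = a.
Proof. by move=> r0 a0; rewrite -powRrM mulVf ?gt_eqF // powRr1. Qed.

Lemma Nr_coord r v j : 0 < r -> `|v j| <= Nr r v.
Proof.
move=> r0; rewrite -[leLHS](powRK r0 (normr_ge0 (v j))) /Nr.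
have h : `|v j| `^ r <= \sum_i `|v i| `^ r.
  rewrite (bigD1 j) //= lerDl sumr_ge0 // => i _; exact: powR_ge0.
apply: ge0_ler_powR => //; rewrite ?nnegrE ?invr_ge0 ?powR_ge0 ?sumr_ge0 //.
all: try exact: ltW.
all: by move=> i _; exact: powR_ge0.
Qed.
Lemma Nm_coord v j : `|v j| <= Nm v.
Proof. exact: le_bigmax. Qed.

Lemma Nr_mono r u v : 0 < r -> (forall i, `|u i| <= `|v i|) -> Nr r u <= Nr r v.
Proof.
move=> r0 h.
have hs : \sum_i `|u i| `^ r <= \sum_i `|v i| `^ r.
  apply: ler_sum => i _; apply: ge0_ler_powR => //; rewrite ?nnegrE //; exact: ltW.
apply: ge0_ler_powR => //; rewrite ?nnegrE ?invr_ge0 ?sumr_ge0 //.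
all: try exact: ltW.
all: by move=> i _; exact: powR_ge0.
Qed.
Lemma Nm_mono u v : (forall i, `|u i| <= `|v i|) -> Nm u <= Nm v.
Proof. by move=> h; apply: le_bigmax2 => i _. Qed.

Lemma Nr_scale r c v : 0 < r -> Nr r (fun i => c * v i) = `|c| * Nr r v.
Proof.
move=> r0; rewrite /Nr.
under eq_bigr do rewrite normrM powRM //.
rewrite -mulr_sumr powRM ?powR_ge0 //; last by apply: sumr_ge0 => i _; exact: powR_ge0.
by rewrite powRK.
Qed.
Lemma Nm_scale c v : Nm (fun i => c * v i) = `|c| * Nm v.
Proof.
rewrite /Nm; elim/big_ind2: _ => [|a b e f -> ->|i _]; first by rewrite mulr0.
  by rewrite maxr_pMr.
by rewrite normrM.
Qed.

Lemma Nm_tri u v : Nm (fun i => u i + v i) <= Nm u + Nm v.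
Proof.
apply: bigmax_le => [|i _]; first by rewrite addr_ge0 ?Nm_ge0.
by rewrite (le_trans (ler_normD _ _)) // lerD ?Nm_coord.
Qed.


Lemma powR_inv (A r : R) : 0 < A -> (A^-1) `^ r = (A `^ r)^-1.
Proof.
move=> A0; have hA : 0 < A `^ r by exact: powR_gt0.
apply: (@mulIf _ (A `^ r)); first by rewrite gt_eqF.
rewrite -powRM ?invr_ge0 ?ltW // mulVf ?gt_eqF // mulVf ?gt_eqF //.
by rewrite powR1.
Qed.

Lemma Nr_tri_nn_fwd : True. Proof. by []. Qed.
Lemma mink_key r (a b : 'I_n -> R) (A B Sa Sb : R) : 1 <= r ->
  (forall i, 0 <= a i) -> (forall i, 0 <= b i) -> 0 < A -> 0 < B ->
  \sum_i `|a i| `^ r = Sa -> \sum_i `|b i| `^ r = Sb ->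
  A `^ r = Sa -> B `^ r = Sb ->
  \sum_i `|a i + b i| `^ r <= (A + B) `^ r.
Proof.
move=> r1 a0 b0 Ap Bp HSa HSb ASa BSb.
have Sap : 0 < Sa by rewrite -ASa; exact: powR_gt0.
have Sbp : 0 < Sb by rewrite -BSb; exact: powR_gt0.
have Tp : 0 < A + B := addr_gt0 Ap Bp.
have T0 : 0 <= A + B := ltW Tp.
pose t := A / (A + B).
have t0 : 0 <= t := divr_ge0 (ltW Ap) T0.
have t1 : t <= 1.
  rewrite /t ler_pdivrMr // mul1r lerDl; exact: ltW.
have hA : (A^-1) `^ r = Sa^-1 by rewrite powR_inv // ASa.
have hB : (B^-1) `^ r = Sb^-1 by rewrite powR_inv // BSb.
apply: (@le_trans _ _ (\sum_i ((A + B) `^ r * t / Sa * `|a i| `^ r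
                               + (A + B) `^ r * (1 - t) / Sb * `|b i| `^ r))).
  apply: ler_sum => i _.
  have ei : a i + b i = (A + B) * (t * (a i / A) + (1 - t) * (b i / B)).
    rewrite /t; timeout 30 field.
    all: try by rewrite gt_eqF.
    all: try by apply/andP; split; rewrite gt_eqF.
    all: try by repeat (apply/andP; split); rewrite gt_eqF.
  have c0 : 0 <= t * (a i / A) + (1 - t) * (b i / B).
    apply: addr_ge0; apply: mulr_ge0; rewrite ?subr_ge0 //; apply: divr_ge0 => //; exact: ltW.
  have ab0 : 0 <= a i + b i by exact: addr_ge0.
  rewrite (ger0_norm ab0) ei powRM //.
  have := powR_conv r1 t0 t1 (divr_ge0 (a0 i) (ltW Ap)) (divr_ge0 (b0 i) (ltW Bp)).
  rewrite powRM ?invr_ge0; [|exact: a0|exact: ltW].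
  rewrite powRM ?invr_ge0; [|exact: b0|exact: ltW].
  rewrite hA hB !ger0_norm // => h.
  apply: le_trans (ler_wpM2l (powR_ge0 _ _) h) _.
  by rewrite le_eqVlt; apply/orP; left; apply/eqP; timeout 30 ring.
rewrite big_split /= -!mulr_sumr HSa HSb.
by rewrite !divfK ?gt_eqF // -mulrDr (addrC t) subrK mulr1.
Qed.

Lemma Nr_tri_nn r a b : 1 <= r -> (forall i, 0 <= a i) -> (forall i, 0 <= b i) ->
  Nr r (fun i => a i + b i) <= Nr r a + Nr r b.
Proof.
move=> r1 a0 b0; have r0 : 0 < r by exact: lt_le_trans ltr01 r1.
have [A0|A0] := eqVneq (Nr r a) 0.
  have ha i : a i = 0.
    by apply/eqP; rewrite -normr_le0 -A0 Nr_coord.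
  rewrite A0 add0r /Nr; under eq_bigr do rewrite ha add0r; by [].
have [B0|B0] := eqVneq (Nr r b) 0.
  have hb i : b i = 0.
    by apply/eqP; rewrite -normr_le0 -B0 Nr_coord.
  rewrite B0 addr0 /Nr; under eq_bigr do rewrite hb addr0; by [].
have Ap : 0 < Nr r a by rewrite lt_neqAle eq_sym A0 Nr_ge0.
have Bp : 0 < Nr r b by rewrite lt_neqAle eq_sym B0 Nr_ge0.
have Sa0 : 0 <= \sum_i `|a i| `^ r by apply: sumr_ge0 => i _; exact: powR_ge0.
have Sb0 : 0 <= \sum_i `|b i| `^ r by apply: sumr_ge0 => i _; exact: powR_ge0.
have key := @mink_key r a b (Nr r a) (Nr r b) _ _ r1 a0 b0 Ap Bp erefl erefl (powRK' r0 Sa0) (powRK' r0 Sb0).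
have T0 : 0 <= Nr r a + Nr r b by apply: addr_ge0; apply: Nr_ge0.
rewrite [X in _ <= X](_ : _ = ((Nr r a + Nr r b) `^ r) `^ r^-1); last by rewrite powRK.
apply: ge0_ler_powR => //; rewrite ?nnegrE ?invr_ge0 ?powR_ge0 ?sumr_ge0 //.
all: try exact: ltW.
all: by move=> i _; exact: powR_ge0.
Qed.
Lemma Nr_tri r u v : 1 <= r -> Nr r (fun i => u i + v i) <= Nr r u + Nr r v.
Proof.
move=> r1; have r0 : 0 < r by exact: lt_le_trans ltr01 r1.
have e w : Nr r w = Nr r (fun i => `|w i|).
  by rewrite /Nr; under [in RHS]eq_bigr do rewrite normr_id.
rewrite (e u) (e v).
apply: le_trans (@Nr_tri_nn r (fun i => `|u i|) (fun i => `|v i|) r1 (fun i => normr_ge0 (u i)) (fun i => normr_ge0 (v i))).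
apply: Nr_mono => // i; rewrite [X in _ <= X]ger0_norm ?addr_ge0 //.
exact: ler_normD.
Qed.

Definition nrm (p : \bar R) (v : 'I_n -> R) :=
  match p with r%:E => Nr r v | _ => Nm v end.

Lemma p_cases {p : \bar R} : (1 <= p)%E -> (exists2 r, 1 <= r & p = r%:E) \/ p = +oo%E.
Proof.
case: p => [r|_|] //=; last by right.
by rewrite lee_fin => r1; left; exists r.
Qed.

Variable p : \bar R.
Hypothesis p1 : (1 <= p)%E.

Lemma nrm_ge0 v : 0 <= nrm p v.
Proof. by case: (p_cases p1) => [[r _ ->]|->]; [exact: Nr_ge0|exact: Nm_ge0]. Qed.

Lemma nrm_coord v j : `|v j| <= nrm p v.
Proof.
case: (p_cases p1) => [[r r1 ->]|->]; last exact: Nm_coord.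
by apply: Nr_coord; exact: lt_le_trans ltr01 r1.
Qed.

Lemma nrm_mono u v : (forall i, `|u i| <= `|v i|) -> nrm p u <= nrm p v.
Proof.
case: (p_cases p1) => [[r r1 ->]|->]; last exact: Nm_mono.
by apply: Nr_mono; exact: lt_le_trans ltr01 r1.
Qed.

Lemma nrm_scale c v : nrm p (fun i => c * v i) = `|c| * nrm p v.
Proof.
case: (p_cases p1) => [[r r1 ->]|->]; last exact: Nm_scale.
by apply: Nr_scale; exact: lt_le_trans ltr01 r1.
Qed.

Lemma nrm_tri u v : nrm p (fun i => u i + v i) <= nrm p u + nrm p v.
Proof.
case: (p_cases p1) => [[r r1 ->]|->]; last exact: Nm_tri.
exact: Nr_tri.
Qed.

Lemma nrm0 : nrm p (fun _ => 0) = 0.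
Proof.
transitivity (nrm p (fun i : 'I_n => 0 * (fun _ : 'I_n => (0:R)) i)).
  by congr nrm; apply: funext => i; rewrite mulr0.
by rewrite (nrm_scale 0 (fun _ => 0)) normr0 mul0r.
Qed.

End Aux.

Section PN.
Variable R : realType.
Variable p : \bar R.
Hypothesis p1 : (1 <= p)%E.

Lemma pnormE n (x : 'cV[R]_n) : pnorm p x = nrm p (fun i => x i 0).
Proof. by case: p. Qed.

Lemma pnorm_ge0 n (x : 'cV[R]_n) : 0 <= pnorm p x.
Proof. by rewrite pnormE nrm_ge0. Qed.

Lemma pnorm_coord n (x : 'cV[R]_n) j : `|x j 0| <= pnorm p x.
Proof. by rewrite pnormE (nrm_coord p1 (fun i => x i 0)). Qed.

Lemma pnorm_mono n (x y : 'cV[R]_n) : (forall i, `|x i 0| <= `|y i 0|) -> pnorm p x <= pnorm p y.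
Proof. by move=> h; rewrite !pnormE nrm_mono. Qed.

Lemma pnormZ n c (x : 'cV[R]_n) : pnorm p (c *: x) = `|c| * pnorm p x.
Proof.
rewrite !pnormE -nrm_scale //; congr nrm; apply: funext => i; by rewrite mxE.
Qed.

Lemma pnormD n (x y : 'cV[R]_n) : pnorm p (x + y) <= pnorm p x + pnorm p y.
Proof.
rewrite !pnormE; rewrite (_ : (fun i => (x + y) i 0) = (fun i => x i 0 + y i 0)).
  exact: nrm_tri.
by apply: funext => i; rewrite mxE.
Qed.

Lemma pnorm0 n : pnorm p (0 : 'cV[R]_n) = 0.
Proof.
rewrite pnormE -(@nrm0 R n p p1); congr nrm; apply: funext => i; by rewrite mxE.
Qed.

Lemma opnorm_bounded m n (A : 'M[R]_(m, n)) :
  has_ubound [set pnorm p (A *m x) | x in [set x : 'cV[R]_n | pnorm p x <= 1]].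
Proof.
exists (nrm p (fun _ : 'I_m => \sum_i \sum_j `|A i j|)) => _ [x /= hx <-].
rewrite pnormE; apply: nrm_mono => // i.
rewrite mxE (le_trans (ler_norm_sum _ _ _)) //.
rewrite [X in _ <= X]ger0_norm; last by apply: sumr_ge0 => i' _; apply: sumr_ge0.
apply: (@le_trans _ _ (\sum_j `|A i j|)).
  apply: ler_sum => j _; rewrite normrM -[X in _ <= X]mulr1 ler_wpM2l //.
  exact: le_trans (pnorm_coord x j) hx.
rewrite (bigD1 i) //= lerDl; apply: sumr_ge0 => i' _; exact: sumr_ge0.
Qed.

Lemma opnorm_ub m n (A : 'M[R]_(m, n)) x : pnorm p x <= 1 -> pnorm p (A *m x) <= opnorm p A.
Proof.
move=> hx; apply: ub_le_sup; first exact: opnorm_bounded.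
by exists x.
Qed.

Lemma opnorm_ge0 m n (A : 'M[R]_(m, n)) : 0 <= opnorm p A.
Proof.
have h := opnorm_ub A (x := 0).
rewrite mulmx0 !pnorm0 in h.
exact: h ler01.
Qed.

Lemma opnorm_le m n (A : 'M[R]_(m, n)) z : pnorm p (A *m z) <= opnorm p A * pnorm p z.
Proof.
have [N0|N0] := eqVneq (pnorm p z) 0.
  have -> : z = 0.
    apply/matrixP => i j; rewrite ord1 mxE; apply/eqP.
    by rewrite -normr_le0 -N0 pnorm_coord.
  by rewrite mulmx0 !pnorm0 mulr0.
have Np : 0 < pnorm p z by rewrite lt_neqAle eq_sym N0 pnorm_ge0.
have N0' : 0 <= (pnorm p z)^-1 by rewrite invr_ge0 pnorm_ge0.
have hz : pnorm p ((pnorm p z)^-1 *: z) <= 1.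
  by rewrite pnormZ (ger0_norm N0') mulVf.
have := opnorm_ub A hz; rewrite -scalemxAr pnormZ (ger0_norm N0') => h.
have := ler_wpM2l (ltW Np) h.
by rewrite mulrA mulfV ?gt_eqF // mul1r mulrC.
Qed.

End PN.

Unset Implicit Arguments.
Theorem lemma1 (R : realType) (n0 n1 n2 : nat) (p : \bar R)
  (W1 : 'M[R]_(n1, n0)) (W2 : 'M[R]_(n2, n1)) (sigma : 'I_n1 -> R -> R)
  (alpha beta d : 'I_n1 -> R) :
  (1 <= p)%E ->
  (forall i, 0 <= alpha i /\ alpha i <= beta i) ->
  (forall i, slope_restricted (sigma i) (alpha i) (beta i)) ->
  (forall i, 0 <= d i) ->
  forall x y : 'cV[R]_n0,
    pnorm p (two_layer W1 W2 sigma x - two_layer W1 W2 sigma y) <=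
    (opnorm p W2 *
       opnorm p (diag_mx (\row_i Num.max `|beta i - d i| `|d i - alpha i|) *m W1)
     + opnorm p (W2 *m diag_mx (\row_i d i) *m W1)) * pnorm p (x - y).
Proof.
move=> p1 hab hsl hd x y.
pose z := x - y.
pose u := W1 *m x.
pose v := W1 *m y.
pose w := u - v.
have wz : w = W1 *m z by rewrite /w /z mulmxBr.
have wE i : w i 0 = u i 0 - v i 0.
  by rewrite /w [LHS]mxE [X in _ + X = _]mxE.
pose s i := if w i 0 == 0 then d i else (sigma i (u i 0) - sigma i (v i 0)) / w i 0.
have sE i : sigma i (u i 0) - sigma i (v i 0) = s i * w i 0.
  rewrite /s; case: eqP => [w0|/eqP w0]; last by rewrite divfK.
  by rewrite w0 mulr0 (_ : u i 0 = v i 0) ?subrr //; apply/eqP; rewrite -subr_eq0 -wE w0.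
pose M := diag_mx (\row_i Num.max `|beta i - d i| `|d i - alpha i|).
pose D := diag_mx (\row_i d i).
pose E := diag_mx (\row_i (s i - d i)).
have diffE : two_layer W1 W2 sigma x - two_layer W1 W2 sigma y
             = (W2 *m D *m W1) *m z + W2 *m (E *m w).
  rewrite /two_layer -/u -/v -mulmxBr -!mulmxA -mulmxDr; congr (W2 *m _).
  rewrite -wz /D /E !mul_diag_mx; apply/matrixP => i j; rewrite ord1 !mxE.
  have := sE i; rewrite /u /v !mxE => ->.
  by rewrite -mulrDl (addrC (d i)) subrK.
have sbound i : `|s i - d i| <= Num.max `|beta i - d i| `|d i - alpha i|.
  have h1 : beta i - d i <= Num.max `|beta i - d i| `|d i - alpha i|.
    by rewrite le_max ler_norm.
  have h2 : d i - alpha i <= Num.max `|beta i - d i| `|d i - alpha i|.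
    by rewrite le_max ler_norm orbT.
  rewrite /s; case: eqP => [w0|/eqP w0].
    by rewrite subrr normr0 le_max normr_ge0.
  have uv : u i 0 != v i 0 by rewrite -subr_eq0 -wE.
  have /andP[sa sb] := hsl i _ _ uv.
  rewrite -wE in sa sb.
  rewrite ler_norml; apply/andP; split.
    by rewrite lerNl opprB (le_trans _ h2) // lerB.
  by rewrite (le_trans _ h1) // lerB.
rewrite diffE.
apply: le_trans (pnormD p1 _ _) _.
have P1 := opnorm_le p1 (W2 *m D *m W1) z.
have P2 : pnorm p (W2 *m (E *m w)) <= opnorm p W2 * (opnorm p (M *m W1) * pnorm p z).
  apply: le_trans (@opnorm_le R p p1 _ _ _ _) _.
  apply: ler_wpM2l; first exact: (opnorm_ge0 p1).
  apply: le_trans (@opnorm_le R p p1 _ _ _ _).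
  rewrite -mulmxA -wz; apply: (pnorm_mono p1) => i.
  rewrite !mul_diag_mx !mxE !normrM ler_wpM2r //.
  by rewrite [X in _ <= X]ger0_norm ?sbound // le_max normr_ge0.
rewrite mulrDl [X in _ <= X]addrC -mulrA; exact: lerD.
Qed.
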